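(* For every positive integer $n$, the number of circular permutations of $[n]=\{1,2,\ldots,n\}$ that avoid the pattern $1342$ equals $2^{n-1}-(n-1)$.
   Context: A circular permutation of $[n]$ is an arrangement of $1,2,\ldots,n$ clockwise around a circle, two arrangements being identified if they differ by a rotation. Equivalently, it can be represented uniquely as a linear permutation $\pi_1\pi_2\cdots\pi_n$ of $[n]$ with $\pi_n=n$, whose rotations all represent the same circular permutation. The reduced form of a sequence of distinct positive integers is obtained by replacing its smallest entry by $1$, its next smallest by $2$, and so on; a pattern is such a reduced form. An occurrence of a pattern $\tau$ of length $m$ in a circular permutation $\pi$ is a sequence of $m$ letters of $\pi$ read in clockwise order and lying within one revolution (i.e., a subsequence of some rotation of the linear representation) whose reduced form is $\tau$; $\pi$ avoids $\tau$ if it has no occurrence of $\tau$. *)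

(* Defs.v *)
From mathcomp Require Import all_boot.
Set Implicit Arguments. Unset Strict Implicit. Unset Printing Implicit Defensive.

(* Reduced form of a sequence of distinct naturals: each entry replaced by its
   rank (1 for the smallest, 2 for the next, ...). *)
Definition reduced (u : seq nat) : seq nat :=
  map (fun x => count (fun y => y <= x) u) u.

Fixpoint subseqs (s : seq nat) : seq (seq nat) :=
  if s is x :: s' then
    let r := subseqs s' in [seq x :: t | t <- r] ++ r
  else [:: [::]].

Definition occurs_lin (tau s : seq nat) : bool :=
  has (fun t => reduced t == tau) (subseqs s).

Definition occurs_circ (tau s : seq nat) : bool :=
  has (fun r => occurs_lin tau (rot r s)) (iota 0 (size s)).

Definition avoids_circ (tau s : seq nat) : bool := ~~ occurs_circ tau s.

(* Circular permutations of [n], represented uniquely as linear permutations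
   pi_1 ... pi_n of 1..n with pi_n = n. *)
Definition circ_perms (n : nat) : seq (seq nat) :=
  [seq s <- permutations (iota 1 n) | last 0 s == n].

Definition num_avoiders (tau : seq nat) (n : nat) : nat :=
  size [seq s <- circ_perms n | avoids_circ tau s].

(* Main.v *)
Require Import Defs.
From mathcomp Require Import all_boot zify.
Set Implicit Arguments. Unset Strict Implicit. Unset Printing Implicit Defensive.

Ltac redt := rewrite /reduced /=; apply/eqP/idP; [case; lia | move=> H; repeat f_equal; lia].
Lemma red213 a b c : (reduced [:: a; b; c] == [:: 2; 1; 3]) = (b < a < c).
Proof. redt. Qed.
Lemma red231 a b c : (reduced [:: a; b; c] == [:: 2; 3; 1]) = (c < a < b).
Proof. redt. Qed.
Lemma red1342 a b c d : (reduced [:: a; b; c; d] == [:: 1; 3; 4; 2]) = [&& a < d, d < b & b < c].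
Proof. redt. Qed.
Lemma red3421 a b c d : (reduced [:: a; b; c; d] == [:: 3; 4; 2; 1]) = [&& d < c, c < a & a < b].
Proof. redt. Qed.
Lemma red4213 a b c d : (reduced [:: a; b; c; d] == [:: 4; 2; 1; 3]) = [&& c < b, b < d & d < a].
Proof. redt. Qed.
Lemma red2134 a b c d : (reduced [:: a; b; c; d] == [:: 2; 1; 3; 4]) = [&& b < a, a < c & c < d].
Proof. redt. Qed.

Lemma pcount (T : eqType) (P : pred T) s1 s2 : perm_eq s1 s2 -> count P s1 = count P s2.
Proof. by move/permP. Qed.

Lemma size_reduced u : size (reduced u) = size u.
Proof. by rewrite size_map. Qed.

Lemma reduced_rot k u : reduced (rot k u) = rot k (reduced u).
Proof.
rewrite /reduced -map_rot; apply: eq_map => x.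
by apply: pcount; rewrite perm_rot.
Qed.

Lemma mem_subseqs (u s : seq nat) : (u \in subseqs s) = subseq u s.
Proof.
elim: s u => [|x s IH] u /=.
  by rewrite inE; case: u.
rewrite mem_cat IH; case: u => [|y u].
  by rewrite !sub0seq orbT.
have -> : (y :: u \in [seq x :: t | t <- subseqs s]) = (y == x) && (u \in subseqs s).
  apply/mapP/andP => [[t Ht [-> ->]] | [/eqP -> Hu]]; first by rewrite eqxx.
  by exists u.
rewrite IH /=; case: eqP => [->|] //=.
by apply/orb_idr => /cons_subseq.
Qed.

Lemma occurs_linP tau s :
  reflect (exists2 u, subseq u s & reduced u == tau) (occurs_lin tau s).
Proof.
apply: (iffP hasP) => [[u]|[u]].
  by rewrite mem_subseqs => H1 H2; exists u.
by move=> H1 H2; exists u; rewrite ?mem_subseqs.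
Qed.

Lemma occurs_lin_sub tau s1 s2 : subseq s1 s2 -> occurs_lin tau s1 -> occurs_lin tau s2.
Proof.
move=> H /occurs_linP [u H1 H2]; apply/occurs_linP; exists u => //.
exact: subseq_trans H.
Qed.

Lemma occurs_short tau s : size s < size tau -> occurs_lin tau s = false.
Proof.
move=> H; apply/occurs_linP => [[u /size_subseq Hu /eqP Hr]].
by move: H; rewrite -Hr size_reduced ltnNge Hu.
Qed.

Lemma subseq_catP (u v w : seq nat) : subseq u (v ++ w) ->
  exists u1 u2, [/\ u = u1 ++ u2, subseq u1 v & subseq u2 w].
Proof.
move=> /subseqP[m sz ->]; exists (mask (take (size v) m) v), (mask (drop (size v) m) w).
rewrite -mask_cat ?cat_take_drop ?mask_subseq //.
by rewrite size_takel // sz size_cat leq_addr.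
Qed.

Lemma subseq_split_take (u1 u2 s : seq nat) : subseq (u1 ++ u2) s ->
  exists r, [/\ r <= size s, subseq u1 (take r s) & subseq u2 (drop r s)].
Proof.
elim: s u1 => [|x s IH] u1.
  by rewrite subseq0 => /eqP; case: u1 => //= ->; exists 0.
case: u1 => [|y u1] H.
  by exists 0; rewrite take0 drop0 sub0seq H.
move: H => /=; case: eqP => [->|Hne] H.
  have [r [Hr H1 H2]] := IH _ H.
  by exists r.+1; rewrite /= eqxx.
have [r [Hr H1 H2]] := IH (y :: u1) H.
exists r.+1; split => //=.
case: eqP => // _; exact: subseq_trans H1 (subseq_cons _ _).
Qed.

Lemma occurs_circ_intro tau s u1 u2 : 0 < size s ->
  subseq (u1 ++ u2) s -> reduced (u2 ++ u1) == tau -> occurs_circ tau s.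
Proof.
move=> Hs H Hr; have [r [Hrs H1 H2]] := subseq_split_take H.
have Hsub : subseq (u2 ++ u1) (rot r s) by rewrite /rot; apply: cat_subseq.
apply/hasP; case: (ltnP r (size s)) => Hr'.
  by exists r; rewrite ?mem_iota //; apply/occurs_linP; exists (u2 ++ u1).
exists 0; first by rewrite mem_iota.
have Er : r = size s by apply/eqP; rewrite eqn_leq Hrs Hr'.
rewrite rot0; apply/occurs_linP; exists (u2 ++ u1) => //.
by move: Hsub; rewrite Er rot_size.
Qed.

Lemma occurs_circ_elim tau s : occurs_circ tau s ->
  exists2 k, k <= size tau & occurs_lin (rot k tau) s.
Proof.
move=> /hasP [r _ /occurs_linP [u]]; rewrite /rot => /subseq_catP [u1 [u2 [-> H1 H2]]] /eqP Hr.
exists (size u1).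
  by rewrite -Hr size_reduced size_cat leq_addr.
apply/occurs_linP; exists (u2 ++ u1).
  by rewrite -(cat_take_drop r s); apply: cat_subseq.
by rewrite -rot_size_cat reduced_rot Hr.
Qed.

Definition bad t := [|| occurs_lin [:: 2; 1; 3] t, occurs_lin [:: 1; 3; 4; 2] t | occurs_lin [:: 3; 4; 2; 1] t].

Lemma all_sub (P : pred nat) v w : subseq v w -> all P w -> all P v.
Proof. by move=> H /allP A; apply/allP => y /(mem_subseq H) /A. Qed.

Lemma occ_rcons p w (n : nat) : occurs_lin p (rcons w n) ->
  occurs_lin p w \/ exists2 v, subseq v w & reduced (rcons v n) == p.
Proof.
move/occurs_linP => [u Hu Hr]; move: Hu; rewrite -cats1 => /subseq_catP [u1 [u2 [E H1 H2]]].
subst u; case: u2 H2 Hr => [|y [|z t]].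
- by rewrite cats0 => _ Hr; left; apply/occurs_linP; exists u1.
- by rewrite sub1seq mem_seq1 => /eqP -> Hr; right; exists u1; rewrite // -cats1.
- by move/size_subseq.
Qed.

Lemma size4 (u : seq nat) tau : reduced u == tau -> size tau = 4 ->
  exists a b c d, u = [:: a; b; c; d].
Proof.
move=> /eqP <-; rewrite size_reduced.
by case: u => [|a [|b [|c [|d [|e u]]]]] // _; exists a, b, c, d.
Qed.

Lemma size3 (u : seq nat) tau : reduced u == tau -> size tau = 3 ->
  exists a b c, u = [:: a; b; c].
Proof.
move=> /eqP <-; rewrite size_reduced.
by case: u => [|a [|b [|c [|d u]]]] // _; exists a, b, c.
Qed.

Lemma size3r (v : seq nat) n tau : reduced (rcons v n) == tau -> size tau = 4 ->
  exists a b c, v = [:: a; b; c].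
Proof.
move=> /eqP <-; rewrite size_reduced size_rcons.
by case: v => [|a [|b [|c [|d u]]]] // _; exists a, b, c.
Qed.

Lemma sub4a (p q r s : nat) : subseq [:: p; q; r] [:: p; q; r; s].
Proof. exact: (prefix_subseq [:: p; q; r] [:: s]). Qed.

Lemma bad213 w a b c : subseq [:: a; b; c] w -> b < a < c -> bad w.
Proof. by move=> H1 H2; apply/orP; left; apply/occurs_linP; exists [:: a; b; c]; rewrite ?red213. Qed.

Lemma circ_key w n : all (fun y => y < n) w ->
  occurs_circ [:: 1; 3; 4; 2] (rcons w n) = bad w.
Proof.
move=> Hw; apply/idP/idP.
- move/occurs_circ_elim => [k Hk].
  have Hrc : forall p, size p = 4 -> occurs_lin p (rcons w n) ->
      (forall v, subseq v w -> reduced (rcons v n) == p -> bad w) ->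
      (occurs_lin p w -> bad w) -> bad w.
    move=> p Hp /occ_rcons [H|[v Hv Hr]] F G; [exact: G | exact: F Hv Hr].
  case: k Hk => [|[|[|[|[|k]]]]] // _; rewrite /rot /= => H; apply: (Hrc _ _ H) => //.
  + move=> v Hv Hr; have [a [b [c E]]] := size3r Hr erefl; subst v.
    move: Hr (all_sub Hv Hw); rewrite /= red1342; lia.
  + by move=> G; rewrite /bad G !orbT.
  + move=> v Hv Hr; have [a [b [c E]]] := size3r Hr erefl; subst v.
    move: Hr (all_sub Hv Hw); rewrite /= red3421; lia.
  + by move=> G; rewrite /bad G !orbT.
  + move=> v Hv Hr; have [a [b [c E]]] := size3r Hr erefl; subst v.
    move: Hr (all_sub Hv Hw); rewrite /= red4213; lia.
  + move=> /occurs_linP [u Hu Hr]; have [a [b [c [d E]]]] := size4 Hr erefl; subst u.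
    apply: (@bad213 _ b c d); first exact: subseq_trans (subseq_cons _ _) Hu.
    by move: Hr; rewrite red4213; lia.
  + move=> v Hv Hr; have [a [b [c E]]] := size3r Hr erefl; subst v.
    apply: (@bad213 _ a b c) => //.
    by move: Hr; rewrite /= red2134; lia.
  + move=> /occurs_linP [u Hu Hr]; have [a [b [c [d E]]]] := size4 Hr erefl; subst u.
    apply: (@bad213 _ a b c); first exact: subseq_trans (sub4a _ _ _ _) Hu.
    by move: Hr; rewrite red2134; lia.
  + move=> v Hv Hr; have [a [b [c E]]] := size3r Hr erefl; subst v.
    move: Hr (all_sub Hv Hw); rewrite /= red1342; lia.
  + by move=> G; rewrite /bad G !orbT.
- have Hpos : 0 < size (rcons w n) by rewrite size_rcons.
  case/or3P.
  + move=> /occurs_linP [u Hu Hr]; have [a [b [c E]]] := size3 Hr erefl; subst u.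
    apply: (@occurs_circ_intro _ _ [:: a] [:: b; c; n]) => //.
      by rewrite /= -cats1; exact: (cat_subseq Hu (subseq_refl [:: n])).
    move: Hr (all_sub Hu Hw); rewrite /= red213 red1342; lia.
  + move=> /occurs_linP [u Hu Hr].
    apply: (@occurs_circ_intro _ _ [::] u) => //.
      exact: subseq_trans Hu (subseq_rcons _ _).
    by rewrite cats0.
  + move=> /occurs_linP [u Hu Hr]; have [a [b [c [d E]]]] := size4 Hr erefl; subst u.
    apply: (@occurs_circ_intro _ _ [:: a; b; c] [:: d]) => //.
      by rewrite /=; exact: subseq_trans Hu (subseq_rcons _ _).
    move: Hr; rewrite /= red3421 red1342; lia.
Qed.

Lemma count_bij (T1 T2 : eqType) (l1 : seq T1) (l2 : seq T2) (P : pred T1) (Q : pred T2)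
  (f : T2 -> T1) :
  uniq l1 -> uniq l2 -> injective f ->
  (forall s, s \in l1 -> P s -> exists2 u, (u \in l2) && Q u & s = f u) ->
  (forall u, u \in l2 -> Q u -> (f u \in l1) && P (f u)) ->
  count P l1 = count Q l2.
Proof.
move=> U1 U2 Inj H1 H2.
rewrite -!size_filter -(size_map f (filter Q l2)).
apply: perm_size; apply: uniq_perm.
- exact: filter_uniq.
- by rewrite map_inj_uniq //; exact: filter_uniq.
move=> s; rewrite mem_filter; apply/andP/mapP.
  move=> [Ps Ls]; have [u /andP [Lu Qu] ->] := H1 s Ls Ps; exists u => //.
  by rewrite mem_filter Qu.
move=> [u]; rewrite mem_filter => /andP [Qu Lu] ->.
by have /andP [A B] := H2 u Lu Qu; split.
Qed.

Lemma perms_first (P : pred (seq nat)) s : uniq s -> 0 < size s ->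
  count P (permutations s) =
  sumn [seq count (fun t => P (x :: t)) (permutations (rem x s)) | x <- s].
Proof.
move=> U S; rewrite (pcount _ (permutationsE S)) undup_id // count_flatten -map_comp.
by congr sumn; apply: eq_map => x /=; rewrite count_map.
Qed.

Lemma pcount_perms (P : pred (seq nat)) s1 s2 : perm_eq s1 s2 ->
  count P (permutations s1) = count P (permutations s2).
Proof. by move=> H; apply: pcount; apply: perm_permutations. Qed.

Lemma rem_iota a k x : a <= x < a + k ->
  perm_eq (rem x (iota a k)) (iota a (x - a) ++ iota x.+1 (a + k - x.+1)).
Proof.
move=> H; apply: uniq_perm.
- by apply: rem_uniq; apply: iota_uniq.
- rewrite cat_uniq !iota_uniq andbT /=; apply/hasPn => y; rewrite !mem_iota; lia.
move=> y; rewrite (rem_filter _ (iota_uniq _ _)) mem_filter mem_cat !mem_iota /=; lia.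
Qed.

Lemma sumn_map0 (F : nat -> nat) s : {in s, forall x, F x = 0} -> sumn (map F s) = 0.
Proof.
elim: s => [|y s IH] //= H; rewrite H ?mem_head // IH // => z Hz.
by apply: H; rewrite inE Hz orbT.
Qed.

Lemma occ_cons tau x t : occurs_lin tau (x :: t) =
  has (fun u => reduced (x :: u) == tau) (subseqs t) || occurs_lin tau t.
Proof. by rewrite /occurs_lin /= has_cat has_map. Qed.

Lemma occ_cons_min tau x t : head 0 tau != 1 -> all (fun y => x < y) t ->
  occurs_lin tau (x :: t) = occurs_lin tau t.
Proof.
move=> Ht A; rewrite occ_cons; case: hasP => //= [[u Hu /eqP Hr]].
have Hc : count (fun y => y <= x) u = 0.
  rewrite mem_subseqs in Hu; apply/eqP; rewrite -leqn0 leqNgt -has_count.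
  by apply/hasPn => y Hy /=; rewrite -ltnNge; exact: (allP (all_sub Hu A)).
by move: Ht; rewrite -Hr /= leqnn Hc.
Qed.

Lemma occ_cons_max tau x t : head 0 tau != size tau -> all (fun y => y < x) t ->
  occurs_lin tau (x :: t) = occurs_lin tau t.
Proof.
move=> Ht A; rewrite occ_cons; case: hasP => //= [[u Hu /eqP Hr]].
have Hc : count (fun y => y <= x) u = size u.
  rewrite mem_subseqs in Hu; rewrite -count_predT; apply: eq_in_count => y Hy /=.
  by apply/idP; apply: ltnW; exact: (allP (all_sub Hu A)).
by move: Ht; rewrite -Hr /= leqnn Hc size_map /= add1n eqxx.
Qed.

Definition goodD t := ~~ occurs_lin [:: 2; 1; 3] t && ~~ occurs_lin [:: 2; 3; 1] t.

Lemma two_in (b c : nat) t : b \in t -> c \in t -> b != c ->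
  subseq [:: b; c] t || subseq [:: c; b] t.
Proof.
elim: t => [|y t IH] //=; rewrite !inE => Hb Hc Hbc.
have [Eb|Nb] := eqVneq b y.
  have Hc' : c \in t by move: Hc; rewrite -Eb eq_sym (negPf Hbc).
  by rewrite sub1seq Hc'.
have [Ec|Nc] := eqVneq c y.
  have Hb' : b \in t by move: Hb; rewrite (negPf Nb).
  by rewrite sub1seq Hb' orbT.
move: Hb Hc; rewrite (negPf Nb) (negPf Nc) /= => Hb Hc.
exact: IH.
Qed.

Lemma mem_perms_iota t a k y : t \in permutations (iota a k) -> y \in t -> a <= y < a + k.
Proof. by rewrite mem_permutations => /perm_mem -> ; rewrite mem_iota. Qed.

Lemma iotaSr m n : iota m n.+1 = iota m n ++ [:: m + n].
Proof. by rewrite -addn1 iotaD. Qed.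

Lemma D_count k a : count goodD (permutations (iota a k)) = 2 ^ k.-1.
Proof.
elim: k a => [|k IH] a; first by [].
rewrite perms_first ?iota_uniq ?size_iota //.
rewrite (_ : map _ _ = map (fun x => count (fun t => goodD (x :: t))
   (permutations (iota a (x - a) ++ iota x.+1 (a + k.+1 - x.+1)))) (iota a k.+1)); last first.
  by apply/eq_in_map => x; rewrite mem_iota => Hx; apply: pcount_perms; apply: rem_iota.
case: k IH => [|k] IH.
  rewrite /= subnn /= addn1 subnn /=.
  by rewrite /goodD !occurs_short.
have -> : iota a k.+2 = a :: iota a.+1 k ++ [:: a.+1 + k] by rewrite -iotaSr.
rewrite map_cons map_cat /= sumn_cat /= addn0.
rewrite sumn_map0; last first.
  move=> x; rewrite mem_iota => Hx.
  apply/eqP; rewrite -leqn0 leqNgt -has_count; apply/hasPn => t Ht /=.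
  move: Ht; rewrite mem_permutations => /perm_mem Pt.
  have Ha : a \in t by rewrite Pt mem_cat !mem_iota; lia.
  have Hx1 : x.+1 \in t by rewrite Pt mem_cat !mem_iota; lia.
  rewrite /goodD negb_and !negbK.
  have Hne : a != x.+1 by rewrite neq_ltn; apply/orP; left; lia.
  case/orP: (two_in Ha Hx1 Hne) => H.
    by apply/orP; left; apply/occurs_linP; exists [:: x; a; x.+1]; rewrite /= ?eqxx ?red213 //; lia.
  by apply/orP; right; apply/occurs_linP; exists [:: x; x.+1; a]; rewrite /= ?eqxx ?red231 //; lia.
rewrite subnn /=.
have -> : a + k.+2 - a.+1 = k.+1 by lia.
have -> : a.+1 + k - a = k.+1 by lia.
have -> : a + k.+2 - (a.+1 + k).+1 = 0 by lia.
rewrite cats0 add0n expnS mul2n -addnn; congr (_ + _).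
  rewrite -(IH a.+1); apply: eq_in_count => t Ht.
  have A : all (fun y => a < y) t.
    by apply/allP => y Hy; have := mem_perms_iota Ht Hy; lia.
  by rewrite /goodD !occ_cons_min.
rewrite -(IH a); apply: eq_in_count => t Ht.
have A : all (fun y => y < a.+1 + k) t.
  by apply/allP => y Hy; have := mem_perms_iota Ht Hy; lia.
by rewrite /goodD !occ_cons_max.
Qed.

Lemma split_noinv (P : pred nat) t :
  (forall l h, subseq [:: l; h] t -> ~~ P l -> P h -> False) ->
  t = filter P t ++ filter (predC P) t.
Proof.
elim: t => [|y t IH] //= H.
have H' : forall l h, subseq [:: l; h] t -> ~~ P l -> P h -> False.
  by move=> l h S; apply: H; exact: subseq_trans S (subseq_cons _ _).
case Py: (P y) => /=.
  by rewrite -IH.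
have Hnil : filter P t = [::].
  apply/eqP; rewrite -size_eq0 size_filter -leqn0 leqNgt -has_count.
  apply/hasPn => h Hh; apply/negP => Ph.
  by apply: (H y h); rewrite ?Py //= eqxx sub1seq.
have E := IH H'; rewrite Hnil /= in E.
by rewrite Hnil /= -E.
Qed.

Lemma pairwise_sub2 (r : rel nat) s : (forall p q, subseq [:: p; q] s -> r p q) -> pairwise r s.
Proof.
elim: s => [|y s IH] //= H; apply/andP; split.
  by apply/allP => z Hz; apply: H; rewrite /= eqxx sub1seq.
by apply: IH => p q S; apply: H; exact: subseq_trans S (subseq_cons _ _).
Qed.

Lemma filter_nil (P : pred nat) s : all (fun y => ~~ P y) s -> filter P s = [::].
Proof. by elim: s => //= y s IH /andP [Hy Hs]; rewrite (negPf Hy) IH. Qed.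

Lemma mid1 a x h t : 0 < h -> perm_eq t (iota a (x - a) ++ iota x.+1 h) -> ~~ bad (x :: t) ->
  exists H', [/\ perm_eq H' (iota x.+1 h), goodD H' & t = H' ++ iota a (x - a)].
Proof.
move=> Hh Pt Hb.
have Mt : forall y, y \in t -> (a <= y < x) || (x < y < x.+1 + h).
  by move=> y; rewrite (perm_mem Pt) mem_cat !mem_iota; lia.
have Ut : uniq t by rewrite (perm_uniq Pt) cat_uniq !iota_uniq andbT /=; apply/hasPn => y; rewrite !mem_iota; lia.
have NoInv : forall l hh, subseq [:: l; hh] t -> ~~ (x < l) -> x < hh -> False.
  move=> l hh S Nl Xh; move/negP: Hb; apply; apply/orP; left.
  apply/occurs_linP; exists [:: x; l; hh]; first by rewrite /= eqxx.
  have := Mt l (mem_subseq S (mem_head _ _)); rewrite red213; lia.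
have Et := split_noinv NoInv.
set H' := filter (fun y => x < y) t in Et *.
set L' := filter (predC (fun y => x < y)) t in Et *.
have PH : perm_eq H' (iota x.+1 h).
  have := perm_filter (fun y => x < y) Pt.
  rewrite filter_cat (filter_nil (s := iota a (x - a))) /=.
    rewrite (_ : filter _ (iota x.+1 h) = iota x.+1 h) //.
    by apply/all_filterP/allP => y; rewrite mem_iota /=; lia.
  by apply/allP => y; rewrite mem_iota /=; lia.
have PL : perm_eq L' (iota a (x - a)).
  have := perm_filter (predC (fun y => x < y)) Pt.
  rewrite filter_cat (filter_nil (s := iota x.+1 h)) ?cats0.
    rewrite (_ : filter _ (iota a (x - a)) = iota a (x - a)) //.
    by apply/all_filterP/allP => y; rewrite mem_iota /=; lia.
  by apply/allP => y; rewrite mem_iota /=; lia.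
have SHt : subseq H' t by rewrite Et; exact: prefix_subseq.
have SLt : subseq L' t by rewrite Et; exact: suffix_subseq.
have SL : sorted ltn L'.
  rewrite sorted_pairwise; last exact: ltn_trans.
  apply: pairwise_sub2 => p q S.
  have Hp : p \in L' := mem_subseq S (mem_head _ _).
  have Hq : q \in L' by apply: (mem_subseq S); rewrite !inE eqxx orbT.
  have Upq : uniq [:: p; q] := subseq_uniq S (subseq_uniq SLt Ut).
  move: Upq; rewrite /= inE andbT => Npq.
  have Hx1 : x.+1 \in H' by rewrite (perm_mem PH) mem_iota; lia.
  case: (ltnP p q) => // Hqp.
  exfalso; move/negP: Hb; apply; apply/orP; right; apply/orP; right.
  apply/occurs_linP; exists [:: x; x.+1; p; q].
    rewrite /= eqxx Et -cat1s; apply: cat_subseq => //; by rewrite sub1seq.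
  move: Hp Hq; rewrite !mem_filter /= => /andP [Hp1 Hp2] /andP [Hq1 Hq2].
  have := Mt p Hp2; have := Mt q Hq2; rewrite red3421; lia.
have EL : L' = iota a (x - a).
  apply: (irr_sorted_eq ltn_trans ltnn SL (iota_ltn_sorted a (x - a))).
  exact: perm_mem PL.
exists H'; split => //; last by rewrite -EL.
apply/andP; split.
  apply/negP => O; move/negP: Hb; apply; apply/orP; left.
  by apply: (occurs_lin_sub _ O); exact: subseq_trans SHt (subseq_cons _ _).
apply/negP => /occurs_linP [u Su Hr]; move/negP: Hb; apply; apply/orP; right; apply/orP; left.
have [p [q [r E]]] := size3 Hr erefl; subst u.
apply/occurs_linP; exists [:: x; p; q; r].
  by rewrite /= eqxx; exact: subseq_trans Su SHt.
have AH : all (fun y => x < y) H' by apply/allP => y; rewrite mem_filter => /andP [].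
by have := all_sub Su AH; rewrite /= andbT; move: Hr; rewrite red231 red1342; lia.
Qed.

Lemma sub_single (u : seq nat) x : subseq u [:: x] -> (u == [::]) || (u == [:: x]).
Proof.
case: u => [|y [|z u]] S //.
  by move: S; rewrite sub1seq mem_seq1 => /eqP ->; rewrite eqxx orbT.
by have := size_subseq S.
Qed.

Lemma goodD_sub u v : subseq u v -> goodD v -> goodD u.
Proof.
move=> S /andP [A B]; apply/andP; split; apply/negP => O.
  by move/negP: A; apply; exact: occurs_lin_sub S O.
by move/negP: B; apply; exact: occurs_lin_sub S O.
Qed.

Lemma goodD3 p q r : goodD [:: p; q; r] -> ~~ (q < p < r) && ~~ (r < p < q).
Proof.
move=> /andP [A B]; apply/andP; split; [move: A | move: B]; apply: contra => H;
  apply/occurs_linP; exists [:: p; q; r]; rewrite ?red213 ?red231 ?subseq_refl //.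
Qed.

Lemma goodD4 p q r s : goodD [:: p; q; r; s] ->
  (~~ (q < p < r) && ~~ (r < p < q)) && (~~ (r < q < s) && ~~ (s < q < r)).
Proof.
move=> G; apply/andP; split; apply: goodD3.
  exact: goodD_sub (sub4a _ _ _ _) G.
exact: goodD_sub (subseq_cons _ _) G.
Qed.

Ltac gD G1 := lazymatch type of G1 with
  | is_true (goodD [:: _; _; _]) => move/goodD3: G1
  | is_true (goodD [:: _; _; _; _]) => move/goodD4: G1
  | _ => idtac end.

Lemma mid2 a x h H' : perm_eq H' (iota x.+1 h) -> goodD H' ->
  ~~ bad (x :: H' ++ iota a (x - a)).
Proof.
move=> PH G.
have AH : all (fun y => x < y) H'.
  by apply/allP => y; rewrite (perm_mem PH) mem_iota; lia.
have AL : all (fun y => y < x) (iota a (x - a)).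
  by apply/allP => y; rewrite mem_iota; lia.
have SL : sorted ltn (iota a (x - a)) := iota_ltn_sorted _ _.
have key : forall tau, occurs_lin tau (x :: H' ++ iota a (x - a)) ->
  exists u0 u1 u2, [/\ reduced (u0 ++ u1 ++ u2) == tau, (u0 == [::]) || (u0 == [:: x]),
     [/\ all (fun y => x < y) u1, goodD u1 & size (u0 ++ u1 ++ u2) = size tau] &
     all (fun y => y < x) u2 && sorted ltn u2].
  move=> tau /occurs_linP [u Su Hr].
  move: Su; rewrite -cat1s => /subseq_catP [u0 [u12 [E0 S0 /subseq_catP [u1 [u2 [E1 S1 S2]]]]]].
  subst u u12; exists u0, u1, u2; split => //.
  - exact: sub_single S0.
  - by split; [exact: all_sub S1 AH | exact: goodD_sub S1 G | rewrite -(eqP Hr) size_reduced].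
  by rewrite (all_sub S2 AL) (subseq_sorted ltn_trans S2 SL).
rewrite /bad; apply/negP; case/or3P => /key [u0 [u1 [u2 [Hr U0 [A1 G1 Hsz] A2]]]];
  case/orP: U0 => /eqP ?; subst u0;
  (case: u1 A1 G1 Hr Hsz => [|p1 [|p2 [|p3 [|p4 [|p5 u1]]]]] A1 G1 Hr Hsz;
   case: u2 A2 Hr Hsz => [|q1 [|q2 [|q3 [|q4 [|q5 u2]]]]] A2 Hr Hsz;
   rewrite ?cat0s ?cat_cons ?cats0 in Hr Hsz;
   try (move: Hsz => /= Hsz; discriminate Hsz);
   gD G1;
   rewrite ?red213 ?red1342 ?red3421 in Hr; move: Hr A1 A2 => /=; lia).
Qed.

Lemma cat_injr (L : seq nat) : injective (fun s : seq nat => s ++ L).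
Proof.
move=> s1 s2 /= E.
have Hs : size s1 = size s2 by move: (congr1 size E); rewrite !size_cat; lia.
by rewrite -(take_size_cat L (erefl (size s1))) E take_size_cat.
Qed.

Lemma sum_pow k a : sumn [seq 2 ^ (a + k - x).-1 | x <- iota a k] = 2 ^ k - 1.
Proof.
elim: k a => [|k IH] a //=.
rewrite (_ : map _ _ = [seq 2 ^ (a.+1 + k - x).-1 | x <- iota a.+1 k]); last first.
  by apply: eq_map => x; rewrite addSnnS.
rewrite IH (_ : a + k.+1 - a = k.+1) ?expnS; last by lia.
by have := expn_gt0 2 k; simpl; lia.
Qed.

Lemma C_count k a : count (fun t => ~~ bad t) (permutations (iota a k)) = 2 ^ k - k.
Proof.
elim: k a => [|k IH] a; first by [].
rewrite perms_first ?iota_uniq ?size_iota //.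
rewrite (_ : map _ _ = map (fun x => count (fun t => ~~ bad (x :: t))
   (permutations (iota a (x - a) ++ iota x.+1 (a + k.+1 - x.+1)))) (iota a k.+1)); last first.
  by apply/eq_in_map => x; rewrite mem_iota => Hx; apply: pcount_perms; apply: rem_iota.
rewrite iotaSr map_cat sumn_cat /= addn0.
rewrite (_ : map _ _ = [seq 2 ^ (a + k - x).-1 | x <- iota a k]); last first.
  apply/eq_in_map => x; rewrite mem_iota => Hx.
  have -> : (a + k - x).-1 = (a + k.+1 - x.+1).-1 by lia.
  rewrite -(D_count _ x.+1).
  apply: (count_bij (f := fun s => s ++ iota a (x - a))); try exact: permutations_uniq.
  - exact: cat_injr.
  - move=> s; rewrite mem_permutations => Ps Bs.
    have Hh : 0 < a + k.+1 - x.+1 by lia.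
    have [H' [P1 G1 E]] := mid1 Hh Ps Bs.
    by exists H' => //; rewrite mem_permutations P1 G1.
  - move=> u; rewrite mem_permutations => Pu Gu; apply/andP; split.
      by rewrite mem_permutations perm_catC perm_cat2l.
    exact: (@mid2 a x _ u Pu Gu).
rewrite [sumn _](_ : _ = 2 ^ k - 1); last exact: sum_pow.
have -> : a + k - a = k by lia.
have -> : a + k.+1 - (a + k).+1 = 0 by lia.
rewrite cats0 (_ : count _ _ = 2 ^ k - k).
  by rewrite expnS; have := ltn_expl k (ltnSn 1); lia.
rewrite -(IH a); apply: eq_in_count => t Ht.
have A : all (fun y => y < a + k) t.
  by apply/allP => y Hy; have := mem_perms_iota Ht Hy; lia.
by rewrite /bad !occ_cons_max.
Qed.

Theorem theorem2 (n : nat) : 0 < n ->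
  num_avoiders [:: 1; 3; 4; 2] n = 2 ^ n.-1 - n.-1.
Proof.
move=> Hn; rewrite /num_avoiders /circ_perms -filter_predI size_filter.
rewrite -(C_count n.-1 1).
have Ei : iota 1 n = rcons (iota 1 n.-1) n.
  by rewrite -cats1 -{1}(prednK Hn) iotaSr add1n prednK.
apply: (count_bij (f := fun w => rcons w n)); try exact: permutations_uniq.
- exact: rcons_injl.
- move=> s; rewrite mem_permutations => Ps /andP [Av Ls].
  case: s Ps Ls Av => [|y s'] Ps Ls Av.
    by move: Ls Hn => /eqP <-.
  have Es : y :: s' = rcons (belast y s') n by move: Ls => /= /eqP Ls; rewrite lastI Ls.
  exists (belast y s'); last exact: Es.
  have Pw : perm_eq (belast y s') (iota 1 n.-1).
    by move: Ps; rewrite Es Ei -!cats1 perm_cat2r.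
  rewrite mem_permutations Pw /=.
  have Aw : all (fun z => z < n) (belast y s').
    by apply/allP => z; rewrite (perm_mem Pw) mem_iota; lia.
  by move: Av; rewrite Es /avoids_circ circ_key.
- move=> w; rewrite mem_permutations => Pw Bw; apply/andP; split.
    by rewrite mem_permutations Ei -!cats1 perm_cat2r.
  have Aw : all (fun z => z < n) w.
    by apply/allP => z; rewrite (perm_mem Pw) mem_iota; lia.
  by rewrite /= last_rcons eqxx andbT /avoids_circ circ_key.
Qed.
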